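(* Let $\alpha=(\alpha_1,\dots,\alpha_L)$ be a weak composition, $n$ a positive integer and $B\in\mathrm{GMLQ}(\alpha,n)$ with labelling $L_G(B)$. Then: (i) within each row of $L_G(B)$, the largest label of an anti-particle is strictly smaller than the smallest label of a particle; (ii) if $\alpha_1\ge\alpha_2\ge\cdots\ge\alpha_L$, then the labels of the particles in $L_G(B)$ coincide with the Ferrari–Martin labels of $B$, and for each $1\le r\le L$ every anti-particle in row $r$ of $L_G(B)$ has label $r-1$.
   Context: $\mathrm{GMLQ}(\alpha,n)$ is the set of tuples $B=(B_1,\dots,B_L)$ of subsets of $[n]$ with $|B_j|=\alpha_j$, drawn with rows $1..L$ bottom to top and columns $1..n$ left to right; cells $(r,j)$ with $j\in B_r$ are particles (balls), the others anti-particles. Labelling $L_G(B)$: row $L$: particles get label $L$, anti-particles $L-1$. For $r=L-1,\dots,1$: with $w_1,\dots,w_n$ the labels of row $r+1$, order the columns $i_1,\dots,i_n$ so that $w_{i_1}\ge\cdots\ge w_{i_n}$, ties by increasing column index; let $s=|B_r|$. Particle phase: for $k=1,\dots,s$, the first unlabelled particle of row $r$ weakly to the right of column $i_k$ cyclically ($i_k,i_k+1,\dots,n,1,\dots$) gets label $w_{i_k}$. Anti-particle phase: for $k=n,n-1,\dots,s+1$, the first unlabelled anti-particle of row $r$ weakly to the left of column $i_k$ cyclically ($i_k,i_k-1,\dots,1,n,\dots$) gets label $w_{i_k}-1$. Ferrari–Martin labels (for $\alpha$ weakly decreasing): for $r=L,\dots,2$, every unlabelled ball of row $r$ gets label $r$;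 then the balls of row $r$, in decreasing label order (left to right among ties), are each paired with the first unlabelled ball of row $r-1$ weakly to the right cyclically modulo $n$, which gets the same label; finally unlabelled balls of row 1 get label 1. *)

(* Defs.v *)
(* Columns of [n] are encoded as the nats 0..n-1
   (column c of the paper is c-1 here); rows are numbered 1..L as in the paper. *)
From mathcomp Require Import all_boot.
Set Implicit Arguments. Unset Strict Implicit. Unset Printing Implicit Defensive.

Section Defs.
Variable n : nat.

Definition Brow (B : seq {set 'I_n}) (r : nat) : {set 'I_n} := nth set0 B r.-1.

Definition isp (S : {set 'I_n}) (j : nat) : bool := [exists x in S, val x == j].

Definition inGMLQ (alpha : seq nat) (B : seq {set 'I_n}) : Prop :=
  size B = size alpha /\
  forall i, i < size alpha -> #|nth set0 B i| = nth 0 alpha i.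

Definition geq_lab (w : seq nat) (i j : nat) : bool :=
  (nth 0 w j < nth 0 w i) || ((nth 0 w i == nth 0 w j) && (i <= j)).

Definition cyc_right (i t : nat) : nat := (i + t) %% n.
Definition cyc_left (i t : nat) : nat := (i + n - t) %% n.

Definition place (dir : nat -> nat -> nat) (P : pred nat)
    (lab : seq (option nat)) (i v : nat) : seq (option nat) :=
  let t := find (fun t => P (dir i t) && (nth None lab (dir i t) == None)) (iota 0 n) in
  if t < n then set_nth None lab (dir i t) (Some v) else lab.

(* one step of the labelling L_G: from labels w of row r+1 to labels of row r,
   whose particle set is S *)
Definition LG_step (w : seq nat) (S : {set 'I_n}) : seq nat :=
  let ord := sort (geq_lab w) (iota 0 n) in
  let s := #|S| in
  let lab1 := foldl (fun lab i => place cyc_right (isp S) lab i (nth 0 w i))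
                    (nseq n None) (take s ord) in
  let lab2 := foldl (fun lab i => place cyc_left (fun c => ~~ isp S c) lab i (nth 0 w i - 1))
                    lab1 (rev (drop s ord)) in
  map (odflt 0) lab2.

(* labels of row L - d in L_G(B) *)
Fixpoint LGd (B : seq {set 'I_n}) (d : nat) : seq nat :=
  match d with
  | 0 => [seq if isp (Brow B (size B)) j then size B else (size B).-1 | j <- iota 0 n]
  | d'.+1 => LG_step (LGd B d') (Brow B (size B - d'.+1))
  end.

Definition LGlab (B : seq {set 'I_n}) (r j : nat) : nat := nth 0 (LGd B (size B - r)) j.

(* one step of Ferrari--Martin labelling: w = labels of the balls of row r
   (particle set Sr), Sb = particle set of row r-1 = rb.  Entries at anti-particle cells are
   irrelevant (set to rb). *)
Definition FM_step (w : seq nat) (Sr Sb : {set 'I_n}) (rb : nat) : seq nat :=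
  let balls := sort (geq_lab w) [seq j <- iota 0 n | isp Sr j] in
  let lab := foldl (fun lab i => place cyc_right (isp Sb) lab i (nth 0 w i))
                   (nseq n None) balls in
  map (odflt rb) lab.

(* Ferrari--Martin labels of row L - d *)
Fixpoint FMd (B : seq {set 'I_n}) (d : nat) : seq nat :=
  match d with
  | 0 => nseq n (size B)
  | d'.+1 => FM_step (FMd B d') (Brow B (size B - d')) (Brow B (size B - d'.+1))
                     (size B - d'.+1)
  end.

Definition FMlab (B : seq {set 'I_n}) (r j : nat) : nat := nth 0 (FMd B (size B - r)) j.

End Defs.

(* Main.v *)
Require Import Defs.
From mathcomp Require Import all_boot zify.
Set Implicit Arguments. Unset Strict Implicit. Unset Printing Implicit Defensive.
Section Fill.
Variable n : nat.
Hypothesis n_gt0 : 0 < n.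

Lemma cover_right i c : c < n -> exists2 t, t < n & cyc_right n i t = c.
Proof. move=> cn; exists ((c + n - i %% n) %% n); first by rewrite ltn_mod.
rewrite /cyc_right. rewrite -modnDml -modnDmr modn_mod modnDmr.
have hi : i %% n < n by rewrite ltn_mod.
have -> : i %% n + (c + n - i %% n) = c + n by lia.
by rewrite modnDr modn_small.
Qed.

Lemma cover_left i c : c < n -> exists2 t, t < n & cyc_left n i t = c.
Proof. move=> cn; exists ((i %% n + n - c) %% n); first by rewrite ltn_mod.
rewrite /cyc_left. have hi : i %% n < n by rewrite ltn_mod.
move: (divn_eq i n) => ei.
case: (leqP c (i %% n)) => h.
- rewrite (_ : (i %% n + n - c) %% n = i %% n - c).
    have -> : i + n - (i %% n - c) = (i %/ n).+1 * n + c by rewrite mulSn; lia.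
    by rewrite modnMDl modn_small.
  rewrite (_ : i %% n + n - c = (i %% n - c) + n); last by lia.
  by rewrite modnDr modn_small //; lia.
- rewrite (modn_small (_ : i %% n + n - c < n)); last by lia.
  have -> : i + n - (i %% n + n - c) = (i %/ n) * n + c by lia.
  by rewrite modnMDl modn_small.
Qed.

Definition cnt (P : pred nat) (lab : seq (option nat)) :=
  count (fun c => P c && (nth None lab c == None)) (iota 0 n).

Lemma count_set (s : seq nat) (p p' : pred nat) c0 : uniq s -> c0 \in s -> p c0 -> ~~ p' c0 ->
  (forall c, c != c0 -> p' c = p c) -> count p s = (count p' s).+1.
Proof.
elim: s => //= x s IH /andP[xs us]; rewrite inE => /orP[/eqP->|cs] pc pc' e.
- rewrite pc (negbTE pc') /= add1n; congr S; apply: eq_in_count => y ys.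
  by rewrite e //; apply/eqP => yx; move: xs; rewrite -yx ys.
- have xc : x != c0 by apply/eqP => xc; move: xs; rewrite xc cs.
  by rewrite (IH us cs pc pc' e) (e _ xc) addnS.
Qed.

Definition covers (dir : nat -> nat -> nat) := forall i c, c < n -> exists2 t, t < n & dir i t = c.
Definition bounded (dir : nat -> nat -> nat) := forall i t, dir i t < n.

Lemma place_spec dir P lab i v : covers dir -> bounded dir -> 0 < cnt P lab ->
 exists c0, [/\ c0 < n, P c0, nth None lab c0 = None & place n dir P lab i v = set_nth None lab c0 (Some v)].
Proof.
move=> cov bnd; rewrite /cnt -has_count => /hasP[c]; rewrite mem_iota => /andP[_ cn] /andP[Pc Nc].
rewrite /place; set q := (fun t => P (dir i t) && _).
have hq : has q (iota 0 n).
  have [t tn e] := cov i c cn; apply/hasP; exists t; first by rewrite mem_iota.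
  by rewrite /q e Pc Nc.
move: (hq); rewrite has_find size_iota => ->.
move: (nth_find 0 hq); rewrite nth_iota; last by rewrite -{2}(size_iota 0 n) -has_find.
rewrite add0n.
rewrite /q => /andP[P1 /eqP N1]; exists (dir i (find q (iota 0 n))); split=> //.
Qed.

Lemma cnt_set (P : pred nat) (lab : seq (option nat)) c0 (v : nat) : c0 < n -> P c0 -> nth None lab c0 = None ->
  cnt P lab = (cnt P (set_nth None lab c0 (Some v))).+1.
Proof.
move=> cn Pc Nc; rewrite /cnt; apply: (count_set (c0 := c0)).
- exact: iota_uniq.
- by rewrite mem_iota.
- by rewrite Pc Nc.
- by rewrite nth_set_nth /= eqxx andbF.
- by move=> c /negbTE cc; rewrite nth_set_nth /= cc.
Qed.

Lemma fill dir (P : pred nat) (f : nat -> nat) (xs : seq nat) (lab : seq (option nat)) : covers dir -> bounded dir ->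
  size lab = n -> size xs <= cnt P lab ->
  let res := foldl (fun lab i => place n dir P lab i (f i)) lab xs in
  [/\ size res = n, cnt P res = cnt P lab - size xs &
   forall c, c < n -> if P c && (nth None lab c == None) then
      nth None res c = None \/ exists2 i, i \in xs & nth None res c = Some (f i)
    else nth None res c = nth None lab c].
Proof.
move=> cov bnd; elim: xs lab => [|x xs IH] lab sl hs /=.
  split=> //; first by rewrite subn0.
  by move=> c cn; case: ifP => // /andP[_ /eqP ->]; left.
have [c0 [cn Pc Nc ->]] := place_spec x (f x) cov bnd (leq_ltn_trans (leq0n _) hs).
have e := cnt_set (f x) cn Pc Nc.
have sl1 : size (set_nth None lab c0 (Some (f x))) = n.
  by rewrite size_set_nth sl; apply/maxn_idPr.
have hs1 : size xs <= cnt P (set_nth None lab c0 (Some (f x))) by move: hs; rewrite e.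
have [s2 c2 p2] := IH _ sl1 hs1.
split=> //; first by rewrite c2 e subSS.
move=> c cnc; move: (p2 c cnc); rewrite nth_set_nth /=.
case: (eqVneq c c0) => [->|ne].
  rewrite Pc Nc eqxx /= => ->; right; exists x => //; exact: mem_head.
move=> H; case: ifP H => _ //; case=> [->|[i ii ->]]; [by left | right; exists i => //].
by rewrite inE ii orbT.
Qed.

End Fill.
Lemma count_isp n (S : {set 'I_n}) : count (isp S) (iota 0 n) = #|S|.
Proof.
rewrite -val_enum_ord count_map enumT cardE /enum_mem size_filter.
apply: eq_count => x /=; rewrite /isp; apply/existsP/idP => [[y /andP[yS /eqP e]]|xS].
  by rewrite -(val_inj e).
by exists x; rewrite xS eqxx.
Qed.
Lemma count_nisp n (S : {set 'I_n}) : count (fun c => ~~ isp S c) (iota 0 n) = n - #|S|.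
Proof. by rewrite -(count_isp S) -[X in X - _](size_iota 0) -(count_predC (isp S)) addKn. Qed.
Lemma card_le n (S : {set 'I_n}) : #|S| <= n.
Proof. by rewrite -[X in _ <= X](card_ord n) max_card. Qed.

Lemma geq_lab_total w : total (geq_lab w).
Proof. move=> i j; rewrite /geq_lab; move: (nth 0 w i) (nth 0 w j) => a b. lia. Qed.

Lemma geq_lab_trans w : transitive (geq_lab w).
Proof. move=> j i k; rewrite /geq_lab.
move: (nth 0 w i) (nth 0 w j) (nth 0 w k) => a b c. lia. Qed.

Lemma geq_lab_anti w : antisymmetric (geq_lab w).
Proof. move=> i j; rewrite /geq_lab.
move: (nth 0 w i) (nth 0 w j) => a b. move=> H; apply/eqP; move: H; lia. Qed.

Lemma cnt_none n (P : pred nat) lab : (forall c, c < n -> P c -> nth None lab c = None) ->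
  cnt n P lab = count P (iota 0 n).
Proof.
move=> h; rewrite /cnt; apply: eq_in_count => c; rewrite mem_iota add0n => /andP[_ cn] /=.
by case Pc: (P c) => //=; rewrite h.
Qed.

Lemma cnt_nseq n (P : pred nat) : cnt n P (nseq n None) = count P (iota 0 n).
Proof. by apply: cnt_none => c _ _; rewrite nth_nseq; case: ifP. Qed.

Lemma cnt0 n (P : pred nat) lab c : cnt n P lab = 0 -> c < n -> P c -> nth None lab c != None.
Proof.
rewrite /cnt => h0; have : ~~ has (fun c => P c && (nth None lab c == None)) (iota 0 n).
  by rewrite has_count h0.
move=> /hasPn h cn Pc.
by move: (h c); rewrite mem_iota add0n cn Pc /= => /(_ isT).
Qed.

Lemma bnd_right n : 0 < n -> bounded n (cyc_right n).
Proof. by move=> n0 i t; rewrite /cyc_right ltn_mod. Qed.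
Lemma bnd_left n : 0 < n -> bounded n (cyc_left n).
Proof. by move=> n0 i t; rewrite /cyc_left ltn_mod. Qed.

Lemma LG_step_spec n (n0 : 0 < n) w (S : {set 'I_n}) m : 1 <= m -> (forall c, c < n -> m <= nth 0 w c) ->
  size (LG_step w S) = n /\
  (forall c, c < n -> m - 1 <= nth 0 (LG_step w S) c) /\
  (forall j j', j < n -> j' < n -> ~~ isp S j -> isp S j' -> nth 0 (LG_step w S) j < nth 0 (LG_step w S) j').
Proof.
move=> m1 wm; rewrite /LG_step.
set ord := sort _ _; set s := #|S|.
have so : size ord = n by rewrite size_sort size_iota.
have ordn : forall i, i \in ord -> i < n by move=> i; rewrite mem_sort mem_iota.
have sn : s <= n by exact: card_le.
have hs1 : size (take s ord) <= cnt n (isp S) (nseq n None) by rewrite cnt_nseq count_isp size_takel // so.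
have [s1 c1 p1] := @fill n (cyc_right n) (isp S) (nth 0 w) (take s ord) (nseq n None) (cover_right n0) (bnd_right n0) (size_nseq n None) hs1.
set lab1 := foldl _ (nseq n None) _ in s1 c1 p1 *.
have c1' : cnt n (isp S) lab1 = 0 by rewrite c1 cnt_nseq count_isp size_takel ?subnn // so.
have hs2 : size (rev (drop s ord)) <= cnt n (fun c => ~~ isp S c) lab1.
  rewrite size_rev size_drop so cnt_none ?count_nisp //.
  move=> c cn Pc; move: (p1 c cn); rewrite (negbTE Pc) /=; by rewrite nth_nseq; case: ifP.
have [s2 c2 p2] := @fill n (cyc_left n) (fun c => ~~ isp S c) (fun i => nth 0 w i - 1) (rev (drop s ord)) lab1 (cover_left n0) (bnd_left n0) s1 hs2.
set lab2 := foldl _ lab1 _ in s2 c2 p2 *.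
have c2' : cnt n (fun c => ~~ isp S c) lab2 = 0.
  by rewrite c2 size_rev size_drop so cnt_none ?count_nisp ?subnn // => c cn Pc; move: (p1 c cn); rewrite (negbTE Pc) /=; by rewrite nth_nseq; case: ifP.
have hp : forall c, c < n -> isp S c -> exists2 i, i \in take s ord & nth 0 (map (odflt 0) lab2) c = nth 0 w i.
  move=> c cn Pc; rewrite (nth_map None) ?s2 //; move: (p2 c cn); rewrite Pc /= => ->.
  move: (p1 c cn) (cnt0 c1' cn Pc); rewrite Pc nth_nseq cn /= => -[->|[i ii ->]] //.
  by exists i.
have ha : forall c, c < n -> ~~ isp S c -> exists2 i, i \in drop s ord & nth 0 (map (odflt 0) lab2) c = nth 0 w i - 1.
  move=> c cn Pc; rewrite (nth_map None) ?s2 //.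
  move: (p1 c cn); rewrite (negbTE Pc) /= nth_nseq cn => h1.
  move: (p2 c cn) (cnt0 c2' cn Pc); rewrite Pc h1 eqxx /= => -[->|[i ii ->]] //.
  by exists i; rewrite // -mem_rev.
have pw : pairwise (geq_lab w) ord.
  by rewrite -sorted_pairwise ?sort_sorted //; [exact: geq_lab_total | exact: geq_lab_trans].
move: pw; rewrite -(cat_take_drop s ord) pairwise_cat => /and3P[/allrelP H _ _].
split; first by rewrite size_map.
split.
  move=> c cn; case: (boolP (isp S c)) => Pc.
    have [i ii ->] := hp c cn Pc; have := wm i (ordn i (mem_take ii)); lia.
  have [i ii ->] := ha c cn Pc; have := wm i (ordn i (mem_drop ii)); lia.
move=> j j' jn jn' Pj Pj'.
have [i1 ii1 ->] := ha j jn Pj; have [i2 ii2 ->] := hp j' jn' Pj'.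
have := H i2 i1 ii2 ii1; have := wm i1 (ordn i1 (mem_drop ii1)); rewrite /geq_lab; lia.
Qed.

Lemma foldl_eq_in (F : seq (option nat) -> nat -> nat -> seq (option nat)) (f g : nat -> nat) xs lab :
  {in xs, f =1 g} ->
  foldl (fun lab i => F lab i (f i)) lab xs = foldl (fun lab i => F lab i (g i)) lab xs.
Proof.
elim: xs lab => //= x xs IH lab h; rewrite h ?mem_head // IH // => y yi.
by apply: h; rewrite inE yi orbT.
Qed.

Lemma LG_FM_step n (n0 : 0 < n) w wF (Sr Sb : {set 'I_n}) r' :
 #|Sr| <= #|Sb| ->
 (forall c, c < n -> isp Sr c -> nth 0 w c = nth 0 wF c /\ r'.+1 <= nth 0 w c) ->
 (forall c, c < n -> ~~ isp Sr c -> nth 0 w c = r') ->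
 size (LG_step w Sb) = n /\ forall c, c < n ->
 (isp Sb c -> nth 0 (LG_step w Sb) c = nth 0 (FM_step wF Sr Sb r') c /\ r' <= nth 0 (LG_step w Sb) c) /\
 (~~ isp Sb c -> nth 0 (LG_step w Sb) c = r' - 1).
Proof.
move=> hcard hP hA.
set P := sort (geq_lab wF) [seq j <- iota 0 n | isp Sr j].
set A := [seq j <- iota 0 n | ~~ isp Sr j].
have memP : forall i, (i \in P) = isp Sr i && (i < n).
  by move=> i; rewrite mem_sort mem_filter mem_iota add0n leq0n.
have memA : forall i, (i \in A) = ~~ isp Sr i && (i < n).
  by move=> i; rewrite mem_filter mem_iota add0n leq0n.
have sizeP : size P = #|Sr| by rewrite size_sort size_filter count_isp.
have sizeA : size A = n - #|Sr| by rewrite size_filter count_nisp.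
have sbn := card_le Sb.
have ordE : sort (geq_lab w) (iota 0 n) = P ++ A.
  apply: (@sorted_eq _ (geq_lab w)); [exact: geq_lab_trans | exact: geq_lab_anti | | | ].
  - apply: sort_sorted; exact: geq_lab_total.
  - rewrite sorted_pairwise; last exact: geq_lab_trans.
    rewrite pairwise_cat; apply/and3P; split.
    + apply/allrelP => x y; rewrite memP memA => /andP[px xn] /andP[py yn].
      have [_ h] := hP x xn px; rewrite /geq_lab (hA y yn py); by rewrite h.
    + rewrite (eq_in_pairwise (P := [pred i | isp Sr i && (i < n)]) (r' := geq_lab wF)).
      * rewrite -sorted_pairwise; [apply: sort_sorted; exact: geq_lab_total | exact: geq_lab_trans].
      * move=> x y /andP[px xn] /andP[py yn].
        by rewrite /geq_lab (proj1 (hP x xn px)) (proj1 (hP y yn py)).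
      * by apply/allP => x; rewrite memP.
    + apply: (sub_in_pairwise (P := [pred i | ~~ isp Sr i && (i < n)]) (r := leq)).
      * move=> x y /andP[px xn] /andP[py yn] xy.
        by rewrite /geq_lab (hA x xn px) (hA y yn py) eqxx xy orbT.
      * by apply/allP => x; rewrite memA.
      * rewrite -sorted_pairwise; last exact: leq_trans.
        apply: sorted_filter; [exact: leq_trans | exact: iota_sorted].
  - rewrite perm_sort -(perm_filterC (isp Sr) (iota 0 n)) perm_cat2r.
    by rewrite perm_sym perm_sort.
have ns : ~~ (#|Sb| < size P) by rewrite sizeP -leqNgt.
rewrite /LG_step /FM_step ordE take_cat drop_cat (negbTE ns) foldl_cat sizeP -/P.
set k := #|Sb| - #|Sr|.
have eF : foldl (fun lab i => place n (cyc_right n) (isp Sb) lab i (nth 0 w i)) (nseq n None) P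
        = foldl (fun lab i => place n (cyc_right n) (isp Sb) lab i (nth 0 wF i)) (nseq n None) P.
  apply: (@foldl_eq_in (fun lab i v => place n (cyc_right n) (isp Sb) lab i v)) => i.
  by rewrite memP => /andP[pi iin]; exact: (proj1 (hP i iin pi)).
rewrite eF.
have hsF : size P <= cnt n (isp Sb) (nseq n None) by rewrite cnt_nseq count_isp sizeP.
have [sF cF pF] := @fill n (cyc_right n) (isp Sb) (nth 0 wF) P (nseq n None)
   (cover_right n0) (bnd_right n0) (size_nseq n None) hsF.
set labF := foldl _ (nseq n None) P in sF cF pF *.
have cF' : cnt n (isp Sb) labF = k by rewrite cF cnt_nseq count_isp sizeP.
have kA : k <= size A by rewrite sizeA /k; lia.
have hs1 : size (take k A) <= cnt n (isp Sb) labF by rewrite cF' size_takel.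
have [s1 c1 p1] := @fill n (cyc_right n) (isp Sb) (nth 0 w) (take k A) labF
   (cover_right n0) (bnd_right n0) sF hs1.
set lab1 := foldl _ labF _ in s1 c1 p1 *.
have c1' : cnt n (isp Sb) lab1 = 0 by rewrite c1 cF' size_takel ?subnn.
have anti1 : forall c, c < n -> ~~ isp Sb c -> nth None lab1 c = None.
  move=> c cn Pc; move: (p1 c cn); rewrite (negbTE Pc) /= => ->.
  by move: (pF c cn); rewrite (negbTE Pc) /= nth_nseq cn.
have hs2 : size (rev (drop k A)) <= cnt n (fun c => ~~ isp Sb c) lab1.
  rewrite size_rev size_drop sizeA cnt_none ?count_nisp //; first by rewrite /k; lia.
have [s2 c2 p2] := @fill n (cyc_left n) (fun c => ~~ isp Sb c) (fun i => nth 0 w i - 1) (rev (drop k A)) lab1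
   (cover_left n0) (bnd_left n0) s1 hs2.
set lab2 := foldl _ lab1 _ in s2 c2 p2 *.
have c2' : cnt n (fun c => ~~ isp Sb c) lab2 = 0.
  rewrite c2 size_rev size_drop sizeA cnt_none ?count_nisp //; rewrite /k; lia.
split; first by rewrite size_map.
move=> c cn; split=> Pc.
  rewrite (nth_map None) ?s2 // (nth_map None) ?sF //.
  move: (p2 c cn); rewrite Pc /= => ->.
  move: (pF c cn); rewrite Pc nth_nseq cn eqxx /= => -[eN|[i ii eS]].
    move: (p1 c cn) (cnt0 c1' cn Pc); rewrite Pc eN eqxx /= => -[->|[i ii ->]] //= _.
    have := mem_take ii; rewrite memA => /andP[pi iin]; by rewrite (hA i iin pi).
  move: (p1 c cn); rewrite Pc eS /= => ->; rewrite /=.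
  move: ii; rewrite memP => /andP[pi iin]; have [e1 e2] := hP i iin pi.
  by rewrite -e1; split=> //; exact: ltnW.
rewrite (nth_map None) ?s2 //.
move: (p2 c cn) (cnt0 c2' cn Pc); rewrite Pc (anti1 c cn Pc) eqxx /= => -[->|[i ii ->]] //= _.
move: ii; rewrite mem_rev => /mem_drop; rewrite memA => /andP[pi iin]; by rewrite (hA i iin pi).
Qed.

Lemma inv1 n (n0 : 0 < n) (B : seq {set 'I_n}) d : d < size B ->
  size (LGd B d) = n /\ forall c, c < n -> (size B - d) - 1 <= nth 0 (LGd B d) c.
Proof.
elim: d => [|d IH] dL.
  split; first by rewrite size_map size_iota.
  move=> c cn; rewrite (nth_map 0) ?size_iota // nth_iota // add0n subn0.
  case: ifP => _; lia.
have [_ h] := IH (ltnW dL).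
have m1 : 1 <= size B - d - 1 by lia.
have [s1 [h1 _]] := LG_step_spec n0 (Brow B (size B - d.+1)) m1 h.
split=> // c cn; have := h1 c cn; rewrite /=; lia.
Qed.

Lemma inv2 n (n0 : 0 < n) alpha (B : seq {set 'I_n}) d : inGMLQ alpha B ->
  (forall i, i.+1 < size alpha -> nth 0 alpha i.+1 <= nth 0 alpha i) ->
  d < size B ->
  size (LGd B d) = n /\ forall c, c < n ->
   (isp (Brow B (size B - d)) c -> nth 0 (LGd B d) c = nth 0 (FMd B d) c /\ size B - d <= nth 0 (LGd B d) c) /\
   (~~ isp (Brow B (size B - d)) c -> nth 0 (LGd B d) c = size B - d - 1).
Proof.
move=> [hsz hcard] hdec; elim: d => [|d IH] dL.
  split; first by rewrite size_map size_iota.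
  move=> c cn; rewrite (nth_map 0) ?size_iota // nth_iota // add0n !subn0 /= nth_nseq cn.
  split=> Pc; [by rewrite Pc | by rewrite (negbTE Pc) subn1].
have [_ h] := IH (ltnW dL).
have hc : #|Brow B (size B - d)| <= #|Brow B (size B - d.+1)|.
  rewrite /Brow hcard; last by lia.
  rewrite hcard; last by lia.
  have e1 : (size B - d).-1 = (size B - d.+1).-1.+1 by lia.
  rewrite e1; apply: hdec; lia.
have hP : forall c, c < n -> isp (Brow B (size B - d)) c ->
    nth 0 (LGd B d) c = nth 0 (FMd B d) c /\ (size B - d.+1).+1 <= nth 0 (LGd B d) c.
  move=> c cn Pc; have [a _] := h c cn; have [a1 b1] := a Pc; split=> //; lia.
have hA : forall c, c < n -> ~~ isp (Brow B (size B - d)) c -> nth 0 (LGd B d) c = size B - d.+1.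
  move=> c cn Pc; have [_ a] := h c cn; rewrite (a Pc); lia.
have [s1 h1] := LG_FM_step n0 hc hP hA.
by split.
Qed.

Unset Implicit Arguments.
Theorem lemma3p29 (alpha : seq nat) (n : nat) (B : seq {set 'I_n}) :
  0 < n -> inGMLQ alpha B ->
  (* (i) *)
  (forall r, 1 <= r <= size alpha ->
     forall j j', j < n -> j' < n ->
       ~~ isp (Brow B r) j -> isp (Brow B r) j' ->
       LGlab B r j < LGlab B r j') /\
  (* (ii) *)
  ((forall i, i.+1 < size alpha -> nth 0 alpha i.+1 <= nth 0 alpha i) ->
     (forall r j, 1 <= r <= size alpha -> j < n -> isp (Brow B r) j ->
        LGlab B r j = FMlab B r j) /\
     (forall r j, 1 <= r <= size alpha -> j < n -> ~~ isp (Brow B r) j ->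
        LGlab B r j = r - 1)).
Proof.
move=> n0 hG; have hsz : size B = size alpha by case: hG.
rewrite -hsz; split.
  move=> r /andP[r1 rL] j j' jn jn' Pj Pj'; rewrite /LGlab.
  case E: (size B - r) => [|d].
    have Er : r = size B by lia.
    rewrite Er in Pj Pj'; rewrite /= (nth_map 0) ?size_iota // (nth_map 0) ?size_iota //.
    rewrite !nth_iota // !add0n (negbTE Pj) Pj'; lia.
  have Er : r = size B - d.+1 by lia.
  rewrite Er in Pj Pj'.
  have dL : d < size B by lia.
  have [_ h] := inv1 n0 dL.
  have m1 : 1 <= size B - d - 1 by lia.
  have [_ [_ h3]] := LG_step_spec n0 (Brow B (size B - d.+1)) m1 h.
  exact: h3.
move=> hdec; rewrite hsz in hdec; split.
  move=> r j /andP[r1 rL] jn Pj; rewrite /LGlab /FMlab.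
  have dL : size B - r < size B by lia.
  have [_ h] := inv2 n0 hG hdec dL.
  have Er : size B - (size B - r) = r by lia.
  by rewrite Er in h; have [a _] := h j jn; have [a1 _] := a Pj.
move=> r j /andP[r1 rL] jn Pj; rewrite /LGlab.
have dL : size B - r < size B by lia.
  have [_ h] := inv2 n0 hG hdec dL.
have Er : size B - (size B - r) = r by lia.
by rewrite Er in h; have [_ a] := h j jn; rewrite (a Pj).
Qed.
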